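(* Let $n\ge 4$ and let $T$ be the one-column tableau with entries $i<j$ in $[n]$ (two rows), and suppose $T$ is a non-frozen prime tableau in $\mathrm{SSYT}(2,[n])$. Then $F_{2,n}(v_T)$ induces a split positroidal subdivision of the hypersimplex $\Delta(2,n)$, i.e. a positroidal subdivision with exactly two maximal cells.
   Context: $\mathrm{SSYT}(2,[n])$ denotes rectangular semistandard Young tableaux with $2$ rows and entries in $[n]$. A one-column tableau with entries $i<j$ is frozen if $\{i,j\}$ is a cyclic interval of $[n]$, i.e. $j=i+1$ or $(i,j)=(1,n)$; non-frozen means not frozen. Tableaux index the dual canonical basis of the Grassmannian coordinate ring $\mathbb{C}[\mathrm{Gr}(2,n)]$ (for a one-column tableau with entries $i<j$ the basis element is the Plücker coordinate $p_{ij}$); $T$ is prime if its basis element is not the product of the basis elements of two nontrivial tableaux. For $i\in[k-1]$, $j\in[n-k]$ (here $k=2$), the fundamental tableau $T_{i,j}$ is the one-column tableau with entries $[j,j+k]\setminus\{i+j\}$; every tableau is equivalent, modulo removing columns whose entries are consecutive integers, to a unique union of fundamental tableaux $\bigcup T_{i,j}^{\cup c_{i,j}}$, and $v_T=\sum c_{i,j}e_{i,j}\in\mathbb{R}^{(k-1)(n-k)}$. $F_{k,n}(y)=\sum_{J\in\binom{[n]}{k}}P_J(y)e^J$ (modulo the lineality space), where $P_J$ is the tropicalization of the Plücker coordinate $p_J$ of the Speyer–Williams web matrix, the $k\times n$ matrix parametrizing the positive Grassmannian by $(k-1)(n-k)$ positive variables, whose maximal minors are subtraction-free polynomials in these variables.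 The vector $(P_J(v_T))_J$ induces the regular subdivision of $\Delta(k,n)=\mathrm{conv}\{e_J: J\in\binom{[n]}{k}\}$ obtained by lifting $e_J$ to height $P_J(v_T)$ and projecting the lower faces; it is positroidal if all cells are matroid polytopes of positroids (matroids representable by real matrices with all maximal minors nonnegative). *)

(* Defs.v *)
(* concrete reals R, lists. All indices are 1-based as in the paper. *)
From Stdlib Require Import Reals List Permutation Arith Lia Lra.
Import ListNotations.
Open Scope R_scope.

(* J = (i,j) encodes the 2-subset {i<j} of [n] = {1,...,n}. *)
Definition is_pair (n : nat) (J : nat * nat) : Prop :=
  (1 <= fst J)%nat /\ (fst J < snd J)%nat /\ (snd J <= n)%nat.

(* the one-column tableau with entries i<j is frozen iff {i,j} is a cyclic
   interval of [n] *)
Definition frozen (n i j : nat) : Prop := j = S i \/ (i = 1%nat /\ j = n).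

(* A two-row (rectangular) tableau is determined by the multisets of entries of
   its two rows; we store the rows as lists, considered up to permutation. *)
Definition tableau2 : Type := (list nat * list nat)%type.

Definition cols_tab (cs : list (nat * nat)) : tableau2 := (map fst cs, map snd cs).

Definition tab_union (T U : tableau2) : tableau2 := (fst T ++ fst U, snd T ++ snd U).

Definition tab_same (T U : tableau2) : Prop :=
  Permutation (fst T) (fst U) /\ Permutation (snd T) (snd U).

Definition onecol (a b : nat) : tableau2 := ([a], [b]).

Definition consec_ok (n : nat) (C : list nat) : Prop :=
  Forall (fun i => (1 <= i)%nat /\ (S i <= n)%nat) C.
Definition consec_cols (C : list nat) : tableau2 := cols_tab (map (fun i => (i, S i)) C).

(* equivalence modulo removing columns whose entries are consecutive integers *)
Definition tab_equiv (n : nat) (T U : tableau2) : Prop :=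
  exists C D : list nat, consec_ok n C /\ consec_ok n D /\
    tab_same (tab_union T (consec_cols C)) (tab_union U (consec_cols D)).

(* k = 2: fundamental tableau T_{1,j} (j in [n-2]) = one column with entries
   [j, j+2] \ {j+1} = {j, j+2} *)
Definition fund_tab (j : nat) : nat * nat := (j, (j + 2)%nat).

(* union over j in [n-2] of T_{1,j}^{∪ c_j}; the vector v_T = sum c_j e_{1,j} is
   encoded by the function c (only c 1, ..., c (n-2) are used). *)
Definition fund_union (n : nat) (c : nat -> nat) : tableau2 :=
  cols_tab (flat_map (fun j => repeat (fund_tab j) (c j)) (seq 1 (n - 2))).

(* variables x_{1,j}, j in [n-2], are encoded as x : nat -> R (x j = x_{1,j}).
   Gaps d_1 = 1, d_m = x_{m-1} (2 <= m <= n-1). *)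
Definition web_gap (x : nat -> R) (m : nat) : R :=
  match m with O => 0 | S O => 1 | S m' => x m' end.

Definition web_t (x : nat -> R) (j : nat) : R :=
  fold_right Rplus 0 (map (web_gap x) (seq 1 (j - 1))).

Definition web_matrix (x : nat -> R) (r j : nat) : R :=
  match r with S O => 1 | _ => web_t x j end.

Definition web_plucker (x : nat -> R) (i j : nat) : R :=
  web_matrix x 1 i * web_matrix x 2 j - web_matrix x 1 j * web_matrix x 2 i.

(* Subtraction-free expansion of p_{ij}: a list of monomials, each monomial
   being the list (with multiplicity) of the indices of its variables. *)
Definition gap_monomial (m : nat) : list nat :=
  match m with O => [] | S O => [] | S m' => [m'] end.
Definition web_plucker_monomials (i j : nat) : list (list nat) :=
  map gap_monomial (seq i (j - i)).

Definition eval_monomial (x : nat -> R) (mo : list nat) : R :=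
  fold_right Rmult 1 (map x mo).
Definition eval_poly (x : nat -> R) (ms : list (list nat)) : R :=
  fold_right Rplus 0 (map (eval_monomial x) ms).

(* tropicalization (min convention) of a sum of monomials *)
Definition trop_monomial (y : nat -> R) (mo : list nat) : R :=
  fold_right Rplus 0 (map y mo).
Definition trop_poly (y : nat -> R) (ms : list (list nat)) : R :=
  match ms with
  | [] => 0
  | m :: ms' => fold_right (fun m' acc => Rmin (trop_monomial y m') acc)
                           (trop_monomial y m) ms'
  end.

Definition trop_plucker (i j : nat) (y : nat -> R) : R :=
  trop_poly y (web_plucker_monomials i j).

(* sanity check: the monomial list is indeed the expansion of the minor *)
Lemma web_t_split (x : nat -> R) (i k : nat) : (1 <= i)%nat ->
  web_t x (i + k) = web_t x i + eval_poly x (map gap_monomial (seq i k)).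
Proof.
  intros Hi. unfold web_t.
  replace (i + k - 1)%nat with ((i - 1) + k)%nat by lia.
  rewrite seq_app, map_app, fold_right_app.
  replace (1 + (i - 1))%nat with i by lia.
  unfold eval_poly. rewrite map_map.
  assert (H : forall a k0, (1 <= a)%nat ->
     fold_right Rplus 0 (map (fun m => eval_monomial x (gap_monomial m)) (seq a k0))
     = fold_right Rplus 0 (map (web_gap x) (seq a k0))).
  { intros a k0; revert a; induction k0 as [|k0 IH]; intros a Ha; simpl; [reflexivity|].
    rewrite IH by lia. destruct a as [|[|a]]; [lia| |]; unfold eval_monomial; simpl; ring. }
  rewrite H by lia.
  generalize (fold_right Rplus 0 (map (web_gap x) (seq i k))). intro s.
  induction (map (web_gap x) (seq 1 (i - 1))); simpl; lra.
Qed.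

Lemma web_plucker_expansion (x : nat -> R) (i j : nat) :
  (1 <= i)%nat -> (i < j)%nat ->
  web_plucker x i j = eval_poly x (web_plucker_monomials i j).
Proof.
  intros Hi Hij. unfold web_plucker, web_matrix, web_plucker_monomials.
  replace j with (i + (j - i))%nat at 1 by lia.
  rewrite (web_t_split x i (j - i)) by lia. ring.
Qed.

(* vertex e_J of Delta(2,n) lifted to height h J.  A cell of the induced regular
   subdivision (projection of a lower face) is recorded by the set S of
   vertices it contains: S is the set of J where some affine function
   l(x) = c.x + c0 with l(e_J) <= h J for all J attains equality. *)
Definition is_cell (n : nat) (h : nat * nat -> R) (S : nat * nat -> Prop) : Prop :=
  (exists J, is_pair n J /\ S J) /\
  (forall J, S J -> is_pair n J) /\
  exists (c : nat -> R) (c0 : R), forall J, is_pair n J ->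
    c (fst J) + c (snd J) + c0 <= h J /\
    (S J <-> c (fst J) + c (snd J) + c0 = h J).

Definition same_cell (n : nat) (S S' : nat * nat -> Prop) : Prop :=
  forall J, is_pair n J -> (S J <-> S' J).

Definition maximal_cell (n : nat) (h : nat * nat -> R) (S : nat * nat -> Prop) : Prop :=
  is_cell n h S /\
  forall S', is_cell n h S' -> (forall J, S J -> S' J) -> same_cell n S S'.

(* S is the set of bases of a positroid: represented by a real 2 x n matrix
   (rows a, b) with all maximal minors nonnegative; bases = nonzero minors. *)
Definition is_positroid (n : nat) (S : nat * nat -> Prop) : Prop :=
  exists a b : nat -> R,
    (forall J, is_pair n J -> 0 <= a (fst J) * b (snd J) - a (snd J) * b (fst J)) /\
    (forall J, is_pair n J -> (S J <-> a (fst J) * b (snd J) - a (snd J) * b (fst J) <> 0)).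

Definition positroidal_subdivision (n : nat) (h : nat * nat -> R) : Prop :=
  forall S, is_cell n h S -> is_positroid n S.

Definition split_positroidal_subdivision (n : nat) (h : nat * nat -> R) : Prop :=
  positroidal_subdivision n h /\
  exists S1 S2, maximal_cell n h S1 /\ maximal_cell n h S2 /\ ~ same_cell n S1 S2 /\
    forall S, maximal_cell n h S -> same_cell n S S1 \/ same_cell n S S2.

Definition F2_heights (y : nat -> R) : nat * nat -> R :=
  fun J => trop_plucker (fst J) (snd J) y.

(* Main.v *)
Require Import Defs.
From Stdlib Require Import Reals List Permutation Arith Lia Lra ClassicalEpsilon Classical Bool.
Import ListNotations.
Open Scope R_scope.


Definition fle (x t : nat) : nat := if Nat.leb t x then 1%nat else 0%nat.
Definition cntl (f : nat -> nat) (l : list nat) : nat := fold_right Nat.add 0%nat (map f l).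

Lemma cntl_perm f l l' : Permutation l l' -> cntl f l = cntl f l'.
Proof. induction 1; unfold cntl in *; simpl in *; lia. Qed.

Lemma cntl_app f l l' : cntl f (l ++ l') = (cntl f l + cntl f l')%nat.
Proof. induction l; unfold cntl in *; simpl in *; lia. Qed.

Lemma cntl_cons f x l : cntl f (x :: l) = (f x + cntl f l)%nat.
Proof. reflexivity. Qed.

Lemma cntl_ext f g l : (forall x, f x = g x) -> cntl f l = cntl g l.
Proof. intro H. induction l; unfold cntl in *; simpl in *; rewrite ?H; lia. Qed.

Lemma cntl_consec_top f C : cntl f (map fst (map (fun i => (i, S i)) C)) = cntl f C.
Proof. rewrite map_map. simpl. now rewrite map_id. Qed.

Lemma cntl_consec_bot x C : cntl (fle (S x)) (map snd (map (fun i => (i, S i)) C)) = cntl (fle x) C.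
Proof. rewrite map_map. simpl. unfold cntl. rewrite <- (map_map S (fle (S x))).
  f_equal. Qed.

Definition sumL (f : nat -> nat) (L : list nat) : nat := fold_right Nat.add 0%nat (map f L).

Lemma cntl_rep f p k : cntl f (map fst (repeat p k)) = (k * f (fst p))%nat
  /\ cntl f (map snd (repeat p k)) = (k * f (snd p))%nat.
Proof. induction k; unfold cntl in *; simpl in *; lia. Qed.

Lemma cntl_fund_fst (c : nat -> nat) f L :
  cntl f (map fst (flat_map (fun j => repeat (j, (j+2)%nat) (c j)) L)) = sumL (fun j => c j * f j)%nat L.
Proof.
  induction L; simpl; auto. rewrite map_app, cntl_app, IHL.
  rewrite (proj1 (cntl_rep f (a, (a+2)%nat) (c a))). reflexivity.
Qed.

Lemma cntl_fund_snd (c : nat -> nat) f L :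
  cntl f (map snd (flat_map (fun j => repeat (j, (j+2)%nat) (c j)) L)) = sumL (fun j => c j * f (j+2))%nat L.
Proof.
  induction L; simpl; auto. rewrite map_app, cntl_app, IHL.
  rewrite (proj2 (cntl_rep f (a, (a+2)%nat) (c a))). reflexivity.
Qed.

Lemma sumL_cons f x L : sumL f (x :: L) = (f x + sumL f L)%nat.
Proof. reflexivity. Qed.

Lemma sumL_ext f g L : (forall x, f x = g x) -> sumL f L = sumL g L.
Proof. intro H. unfold sumL. induction L; simpl; auto. Qed.

Lemma sumL_add f g L : sumL (fun j => f j + g j)%nat L = (sumL f L + sumL g L)%nat.
Proof. unfold sumL. induction L; simpl; auto. rewrite IHL. lia. Qed.

Lemma sumL_delta (c : nat -> nat) x s k : (s <= x < s + k)%nat ->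
  sumL (fun j => if Nat.eqb j x then c j else 0%nat) (seq s k) = c x.
Proof.
  revert s. induction k; intros s Hs; [lia|]. simpl. rewrite sumL_cons.
  destruct (Nat.eqb_spec s x).
  - subst. assert (forall s, (S x <= s)%nat -> sumL (fun j => if Nat.eqb j x then c j else 0%nat) (seq s k) = 0%nat).
    { clear. 
      induction k; intros s Hs; simpl; auto. rewrite sumL_cons. destruct (Nat.eqb_spec s x); [lia|]. rewrite IHk; lia. }
    rewrite H by lia. lia.
  - rewrite IHk; lia.
Qed.

Lemma c_val (n a b : nat) (c : nat -> nat) :
  tab_equiv n (onecol a b) (fund_union n c) ->
  forall x, (1 <= x <= n - 2)%nat -> ((a <= x /\ x + 2 <= b)%nat -> c x = 1%nat) /\ (~(a <= x /\ x + 2 <= b)%nat -> c x = 0%nat).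
Proof.
  intros [C [D [_ [_ [Ht Hb]]]]] x Hx.
  simpl in Ht, Hb.
  apply (cntl_perm (fle x)) in Ht. apply (cntl_perm (fle (S x))) in Hb.
  rewrite !cntl_app in Ht, Hb.
  unfold consec_cols, fund_union, cols_tab in *. simpl in Ht, Hb.
  rewrite cntl_fund_fst in Ht. rewrite cntl_fund_snd in Hb.
  rewrite cntl_consec_top in Ht. rewrite cntl_consec_bot in Hb.
  assert (E : sumL (fun j => c j * fle x j)%nat (seq 1 (n-2)) =
              (sumL (fun j => c j * fle (S x) (j+2))%nat (seq 1 (n-2)) + c x)%nat).
  { rewrite <- (sumL_delta c x 1 (n-2)) by lia. rewrite <- sumL_add. apply sumL_ext.
    intro j. unfold fle. simpl. destruct (Nat.eqb_spec j x);
    destruct (Nat.leb_spec j x); destruct (Nat.leb_spec (j+2) (S x)); lia. }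
  rewrite cntl_cons, cntl_consec_top in Ht. rewrite cntl_cons, cntl_consec_bot in Hb.
  unfold fle at 1 in Ht. unfold fle at 1 in Hb.
  destruct (Nat.leb_spec a x); destruct (Nat.leb_spec b (S x)); lia.
Qed.


Definition inIb (a b k : nat) : bool := Nat.leb (a+1) k && Nat.leb k b.
Definition Hs (a b k l : nat) : R := if inIb a b k && inIb a b l then 1 else 0.

Lemma inIb_true a b k : inIb a b k = true <-> (a + 1 <= k /\ k <= b)%nat.
Proof. unfold inIb. rewrite andb_true_iff, !Nat.leb_le. tauto. Qed.

Lemma inIb_false a b k : inIb a b k = false <-> ~(a + 1 <= k /\ k <= b)%nat.
Proof. rewrite <- inIb_true. destruct (inIb a b k); intuition congruence. Qed.

Lemma fold_min_le (t : list nat -> R) init l :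
  fold_right (fun m acc => Rmin (t m) acc) init l <= init /\
  forall m, In m l -> fold_right (fun m acc => Rmin (t m) acc) init l <= t m.
Proof.
  induction l as [|x l IH]; simpl; split; try lra; try tauto.
  - destruct IH as [IH1 _]. eapply Rle_trans; [apply Rmin_r|exact IH1].
  - intros m [<-|Hm]. apply Rmin_l. destruct IH as [_ IH2].
    eapply Rle_trans; [apply Rmin_r|exact (IH2 m Hm)].
Qed.

Lemma fold_min_ge (t : list nat -> R) init l v : v <= init -> (forall m, In m l -> v <= t m) ->
  v <= fold_right (fun m acc => Rmin (t m) acc) init l.
Proof.
  intros H1 H2. induction l as [|x l IH]; simpl; auto.
  apply Rmin_glb. apply H2; simpl; auto. apply IH. intros; apply H2; simpl; auto.
Qed.

Lemma trop_le y ms mo : In mo ms -> trop_poly y ms <= trop_monomial y mo.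
Proof.
  destruct ms as [|m ms]; simpl; [tauto|]. intros [<-|H].
  - apply (proj1 (fold_min_le _ _ _)).
  - apply (proj2 (fold_min_le (trop_monomial y) _ ms)); auto.
Qed.

Lemma trop_ge y ms v : ms <> [] -> (forall mo, In mo ms -> v <= trop_monomial y mo) -> v <= trop_poly y ms.
Proof.
  destruct ms as [|m ms]; simpl; [tauto|]. intros _ H.
  apply fold_min_ge; auto.
Qed.

Lemma tm_val y m : (2 <= m)%nat -> trop_monomial y (gap_monomial m) = y (m - 1)%nat.
Proof.
  intros H. destruct m as [|[|m]]; try lia. unfold trop_monomial. simpl.
  replace (m - 0)%nat with m by lia. ring.
Qed.

Lemma tm_val1 y : trop_monomial y (gap_monomial 1) = 0.
Proof. reflexivity. Qed.

Lemma heights (n a b : nat) (c : nat -> nat) :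
  (forall x, (1 <= x <= n - 2)%nat ->
     ((a <= x /\ x + 2 <= b)%nat -> c x = 1%nat) /\ (~(a <= x /\ x + 2 <= b)%nat -> c x = 0%nat)) ->
  (1 <= a)%nat -> (a + 2 <= b)%nat -> (b <= n)%nat ->
  forall p q, (1 <= p)%nat -> (p < q)%nat -> (q <= n)%nat ->
  trop_plucker p q (fun l => INR (c l)) = Hs a b p q.
Proof.
  intros Hc Ha Hab Hbn p q Hp Hpq Hq.
  unfold trop_plucker, web_plucker_monomials, Hs.
  assert (Hne : map gap_monomial (seq p (q - p)) <> []).
  { destruct (q - p)%nat eqn:E; [lia|]. simpl. discriminate. }
  assert (Hin : forall m, (p <= m < q)%nat -> In (gap_monomial m) (map gap_monomial (seq p (q - p)))).
  { intros m Hm. apply in_map. apply in_seq. lia. }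
  destruct (inIb a b p && inIb a b q) eqn:E.
  - apply andb_true_iff in E. destruct E as [E1 E2]. apply inIb_true in E1. apply inIb_true in E2.
    apply Rle_antisym.
    + eapply Rle_trans. apply trop_le. apply (Hin p). lia.
      rewrite tm_val by lia. rewrite (proj1 (Hc (p-1)%nat ltac:(lia)) ltac:(lia)). simpl. lra.
    + apply trop_ge; auto. intros mo Hmo. apply in_map_iff in Hmo. destruct Hmo as [m [<- Hm]].
      apply in_seq in Hm. rewrite tm_val by lia. rewrite (proj1 (Hc (m-1)%nat ltac:(lia)) ltac:(lia)). simpl. lra.
  - assert (E' : (p < a + 1 \/ b < q)%nat).
    { apply andb_false_iff in E. destruct E as [E|E]; apply inIb_false in E; lia. }
    apply Rle_antisym.
    2:{ apply trop_ge; auto. intros mo Hmo. apply in_map_iff in Hmo. destruct Hmo as [m [<- Hm]].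
      destruct (Nat.eq_dec m 1). subst. rewrite tm_val1. lra.
      apply in_seq in Hm. rewrite tm_val by lia. apply pos_INR. }
    destruct E' as [E'|E'].
    + eapply Rle_trans. apply trop_le. apply (Hin p). lia.
      destruct (Nat.eq_dec p 1). subst. rewrite tm_val1. lra.
      rewrite tm_val by lia. rewrite (proj2 (Hc (p-1)%nat ltac:(lia)) ltac:(lia)). simpl. lra.
    + eapply Rle_trans. apply trop_le. apply (Hin (q-1)%nat). lia.
      rewrite tm_val by lia. rewrite (proj2 (Hc (q-1-1)%nat ltac:(lia)) ltac:(lia)). simpl. lra.
Qed.


Ltac fin := match goal with
  | |- _ <-> _ => split; fin
  | |- _ -> _ => intro; fin
  | |- ~ _ => intro; fin
  | H : _ /\ _ |- _ => destruct H; fin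
  | H : _ \/ _ |- _ => destruct H; fin
  | |- _ => first [ solve [auto] | lia | lra | solve [exfalso; lia] | solve [exfalso; lra] | solve [exfalso; congruence] | solve [intuition (try congruence; try lia)] | solve [intuition (try congruence; try lia; try lra)] | idtac ]
  end.

Lemma pos_star n S x (Q : nat -> Prop) :
  (forall p q, (1 <= p)%nat -> (p < q)%nat -> (q <= n)%nat ->
     (S (p, q) <-> (p = x /\ Q q) \/ (q = x /\ Q p))) -> is_positroid n S.
Proof.
  intros HS.
  exists (fun k => if Nat.eq_dec k x then 0 else if excluded_middle_informative (Q k) then (if Nat.ltb k x then 1 else -1) else 0).
  exists (fun k => if Nat.eq_dec k x then 1 else 0).
  split; intros [p q] [H1 [H2 H3]]; simpl in *; [|rewrite HS by lia];
  destruct (Nat.eq_dec p x), (Nat.eq_dec q x), (excluded_middle_informative (Q p)), (excluded_middle_informative (Q q)), (Nat.ltb_spec p x), (Nat.ltb_spec q x); subst; fin.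
Qed.

Ltac spec_all := repeat match goal with H : ?A -> _, z : ?A |- _ => specialize (H z) end.

Lemma pos_T2 n a b S (Z Q : nat -> Prop) :
  (forall k, Z k -> (a + 1 <= k <= b)%nat) -> (forall k, Q k -> ~(a + 1 <= k <= b)%nat) ->
  (forall p q, (1 <= p)%nat -> (p < q)%nat -> (q <= n)%nat ->
     (S (p, q) <-> (Z p /\ Z q) \/ (Z p /\ Q q) \/ (Q p /\ Z q))) -> is_positroid n S.
Proof.
  intros HZ HQ HS.
  exists (fun k => if excluded_middle_informative (Z k) then 1 else if excluded_middle_informative (Q k) then (if Nat.leb k a then 1 else -1) else 0).
  exists (fun k => if excluded_middle_informative (Z k) then INR k else 0).
  split; intros [p q] [H1 [H2 H3]]; simpl in *; [|rewrite HS by lia];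
  pose proof (lt_INR p q H2); pose proof (lt_INR 0 p ltac:(lia)); simpl in *;
  pose proof (HZ p); pose proof (HZ q); pose proof (HQ p); pose proof (HQ q);
  destruct (excluded_middle_informative (Z p)), (excluded_middle_informative (Z q)), (excluded_middle_informative (Q p)), (excluded_middle_informative (Q q)), (Nat.leb_spec p a), (Nat.leb_spec q a); spec_all; fin.
Qed.

Lemma pos_T3 n a b S (Z Q : nat -> Prop) :
  (forall k, Z k -> (a + 1 <= k <= b)%nat) -> (forall k, Q k -> ~(a + 1 <= k <= b)%nat) ->
  (forall p q, (1 <= p)%nat -> (p < q)%nat -> (q <= n)%nat ->
     (S (p, q) <-> (Z p /\ Q q) \/ (Q p /\ Z q))) -> is_positroid n S.
Proof.
  intros HZ HQ HS.
  exists (fun k => if excluded_middle_informative (Z k) then 0 else if excluded_middle_informative (Q k) then (if Nat.leb k a then 1 else -1) else 0).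
  exists (fun k => if excluded_middle_informative (Z k) then 1 else 0).
  split; intros [p q] [H1 [H2 H3]]; simpl in *; [|rewrite HS by lia];
  pose proof (HZ p); pose proof (HZ q); pose proof (HQ p); pose proof (HQ q);
  destruct (excluded_middle_informative (Z p)), (excluded_middle_informative (Z q)), (excluded_middle_informative (Q p)), (excluded_middle_informative (Q q)), (Nat.leb_spec p a), (Nat.leb_spec q a); spec_all; fin.
Qed.

Lemma pos_T4 n a b S (Z : nat -> Prop) : (a + 2 <= b)%nat ->
  (forall p q, (1 <= p)%nat -> (p < q)%nat -> (q <= n)%nat ->
     (S (p, q) <-> Z p /\ Z q /\ ~((a + 1 <= p <= b) /\ (a + 1 <= q <= b))%nat)) -> is_positroid n S.
Proof.
  intros Hab HS.
  exists (fun k => if excluded_middle_informative (Z k) then 1 else 0).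
  exists (fun k => if excluded_middle_informative (Z k) then (if inIb a b k then INR (a + 1) else INR k) else 0).
  split; intros [p q] [H1 [H2 H3]]; simpl in *; [|rewrite HS by lia];
  pose proof (lt_INR p q H2);
  destruct (excluded_middle_informative (Z p)), (excluded_middle_informative (Z q)), (inIb a b p) eqn:Ep, (inIb a b q) eqn:Eq;
  repeat match goal with E : inIb a b _ = true |- _ => apply inIb_true in E | E : inIb a b _ = false |- _ => apply inIb_false in E end; simpl in *; try (pose proof (lt_INR (a+1) q ltac:(lia)));
  try (pose proof (lt_INR p (a+1) ltac:(lia))); fin.
Qed.


Definition Hf (a b : nat) : nat * nat -> R := fun J => Hs a b (fst J) (snd J).

Definition Wprop n a b (S : nat * nat -> Prop) (w : nat -> R) :=
  forall k l, (1 <= k)%nat -> (k < l)%nat -> (l <= n)%nat ->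
    w k + w l <= Hs a b k l /\ (S (k, l) <-> w k + w l = Hs a b k l).

Lemma cell_w n a b S : is_cell n (Hf a b) S -> exists w, Wprop n a b S w.
Proof.
  intros [_ [_ [c [c0 Hc]]]]. exists (fun k => c k + c0 / 2).
  intros k l H1 H2 H3. destruct (Hc (k, l)) as [Hc1 Hc2]. unfold is_pair; simpl; lia.
  unfold Hf in *; simpl in *. split. lra.
  rewrite Hc2. split; intro; lra.
Qed.

Lemma Hs_sym a b k l : Hs a b k l = Hs a b l k.
Proof. unfold Hs. now rewrite andb_comm. Qed.

Lemma bound_sym n a b S w : Wprop n a b S w ->
  forall k l, (1 <= k <= n)%nat -> (1 <= l <= n)%nat -> k <> l -> w k + w l <= Hs a b k l.
Proof.
  intros W k l Hk Hl Hkl. destruct (Nat.lt_ge_cases k l) as [H|H].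
  - apply (W k l); lia.
  - rewrite Hs_sym, Rplus_comm. apply (W l k); lia.
Qed.

Ltac pairtac a b p q :=
  unfold Hs in *; destruct (inIb a b p) eqn:?, (inIb a b q) eqn:?; simpl in *; spec_all; fin.

Lemma cell_positroid n a b S : (1 <= a)%nat -> (a + 2 <= b)%nat -> (b <= n)%nat ->
  is_cell n (Hf a b) S -> is_positroid n S.
Proof.
  intros Ha Hab Hbn Hcell.
  destruct (cell_w _ _ _ _ Hcell) as [w W].
  destruct Hcell as [[[p0 q0] [HJ0 HS0]] _].
  pose proof (bound_sym _ _ _ _ _ W) as BS.
  destruct (classic (exists x, (1 <= x <= n)%nat /\
      ((inIb a b x = true /\ w x > 1/2) \/ (inIb a b x = false /\ w x > 0)))) as [[x [Rx Hx]]|Hnx].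
  - apply (pos_star n S x (fun k => w x + w k = Hs a b x k)).
    intros p q Hp Hpq Hq. rewrite (proj2 (W p q Hp Hpq Hq)).
    destruct (Nat.eq_dec p x); [subst; fin|].
    destruct (Nat.eq_dec q x); [subst; rewrite Hs_sym; fin|].
    pose proof (BS p x ltac:(lia) Rx n0). pose proof (BS q x ltac:(lia) Rx n1).
    unfold Hs in *; destruct (inIb a b p) eqn:?, (inIb a b q) eqn:?, (inIb a b x) eqn:?; simpl in *;
    destruct Hx as [[? ?]|[? ?]]; try congruence; fin.
  - assert (IB : forall x, (1 <= x <= n)%nat -> inIb a b x = true -> w x <= 1/2).
    { intros x Rx Ix. apply Rnot_lt_le. intro. apply Hnx. exists x. split; auto. }
    assert (OB : forall x, (1 <= x <= n)%nat -> inIb a b x = false -> w x <= 0).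
    { intros x Rx Ix. apply Rnot_lt_le. intro. apply Hnx. exists x. split; auto. }
    clear Hnx.
    destruct (classic (exists x, (1 <= x <= n)%nat /\ inIb a b x = true /\ w x = 1/2)) as [[x [Rx [Ix Wx]]]|Hnx].
    + assert (OB2 : forall o, (1 <= o <= n)%nat -> inIb a b o = false -> w o <= -1/2).
      { intros o Ro Io. assert (o <> x) by congruence. pose proof (BS o x Ro Rx H).
        unfold Hs in H0. rewrite Io in H0. simpl in H0. lra. }
      apply (pos_T2 n a b S (fun k => inIb a b k = true /\ w k = 1/2) (fun k => inIb a b k = false /\ w k = -1/2)).
      * intros k [Ik _]. now apply inIb_true.
      * intros k [Ik _]. now apply inIb_false.
      * intros p q Hp Hpq Hq. rewrite (proj2 (W p q Hp Hpq Hq)).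
        pose proof (IB p ltac:(lia)). pose proof (IB q ltac:(lia)).
        pose proof (OB2 p ltac:(lia)). pose proof (OB2 q ltac:(lia)).
        pairtac a b p q.
    + assert (IB2 : forall x, (1 <= x <= n)%nat -> inIb a b x = true -> w x < 1/2).
      { intros x Rx Ix. destruct (Rle_lt_or_eq_dec _ _ (IB x Rx Ix)); auto. exfalso; apply Hnx; eauto. }
      clear Hnx.
      assert (Hok : exists o k, (1 <= o <= n)%nat /\ (1 <= k <= n)%nat /\ o <> k /\ inIb a b o = false /\ w o + w k = 0).
      { destruct HJ0 as [H1 [H2 H3]]; simpl in *.
        destruct (proj2 (W p0 q0 H1 H2 H3)) as [HW _]. specialize (HW HS0).
        pose proof (IB2 p0 ltac:(lia)). pose proof (IB2 q0 ltac:(lia)).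
        unfold Hs in HW. destruct (inIb a b p0) eqn:E1, (inIb a b q0) eqn:E2; simpl in *; spec_all.
        - lra.
        - exists q0, p0. repeat split; try lia; auto; lra.
        - exists p0, q0. repeat split; try lia; auto; lra.
        - exists p0, q0. repeat split; try lia; auto; lra. }
      destruct Hok as [o [k [Ro [Rk [Hok [Io Hwk]]]]]].
      destruct (Rlt_dec 0 (w k)) as [Hk|Hk].
      * assert (Ik : inIb a b k = true).
        { destruct (inIb a b k) eqn:E; auto. pose proof (OB k Rk E). lra. }
        assert (OB3 : forall o', (1 <= o' <= n)%nat -> inIb a b o' = false -> w o' <= - w k).
        { intros o' Ro' Io'. assert (o' <> k) by congruence. pose proof (BS o' k Ro' Rk H).
          unfold Hs in H0. rewrite Io' in H0. simpl in H0. lra. }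
        assert (IB3 : forall k', (1 <= k' <= n)%nat -> inIb a b k' = true -> w k' <= w k).
        { intros k' Rk' Ik'. assert (k' <> o) by congruence. pose proof (BS k' o Rk' Ro H).
          unfold Hs in H0. rewrite Io, andb_false_r in H0. lra. }
        apply (pos_T3 n a b S (fun j => inIb a b j = true /\ w j = w k) (fun j => inIb a b j = false /\ w j = - w k)).
        -- intros j [Ij _]. now apply inIb_true.
        -- intros j [Ij _]. now apply inIb_false.
        -- intros p q Hp Hpq Hq. rewrite (proj2 (W p q Hp Hpq Hq)).
           pose proof (IB2 p ltac:(lia)). pose proof (IB2 q ltac:(lia)).
           pose proof (IB3 p ltac:(lia)). pose proof (IB3 q ltac:(lia)).
           pose proof (OB3 p ltac:(lia)). pose proof (OB3 q ltac:(lia)).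
           pairtac a b p q.
      * pose proof (OB o Ro Io).
        assert (ALL : forall m, (1 <= m <= n)%nat -> w m <= 0).
        { intros m Rm. destruct (Nat.eq_dec m o). subst. lra.
          pose proof (BS m o Rm Ro n0). unfold Hs in H0. rewrite Io, andb_false_r in H0. lra. }
        apply (pos_T4 n a b S (fun j => w j = 0) Hab).
        intros p q Hp Hpq Hq. rewrite (proj2 (W p q Hp Hpq Hq)).
        pose proof (ALL p ltac:(lia)). pose proof (ALL q ltac:(lia)).
        unfold Hs in *; destruct (inIb a b p) eqn:Ep, (inIb a b q) eqn:Eq; simpl in *;
        repeat match goal with E : inIb a b _ = true |- _ => apply inIb_true in E | E : inIb a b _ = false |- _ => apply inIb_false in E end;
        fin.
Qed.


Definition S1 n a b : nat * nat -> Prop := fun J => is_pair n J /\ (inIb a b (fst J) && inIb a b (snd J)) = false.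
Definition S2 n a b : nat * nat -> Prop := fun J => is_pair n J /\ (inIb a b (fst J) || inIb a b (snd J)) = true.

Lemma sym1 n a b S w : Wprop n a b S w -> (forall J, S1 n a b J -> S J) ->
  forall k l, (1 <= k <= n)%nat -> (1 <= l <= n)%nat -> k <> l ->
  (inIb a b k && inIb a b l) = false -> w k + w l = 0.
Proof.
  intros W Hsub k l Hk Hl Hkl E. destruct (Nat.lt_ge_cases k l).
  - assert (HS : S (k, l)). { apply Hsub. split; [unfold is_pair; simpl; lia|exact E]. }
    apply (W k l) in HS; try lia. unfold Hs in HS. rewrite E in HS. exact HS.
  - rewrite andb_comm in E. assert (HS : S (l, k)). { apply Hsub. split; [unfold is_pair; simpl; lia|exact E]. }
    apply (W l k) in HS; try lia. unfold Hs in HS. rewrite E in HS. lra.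
Qed.

Lemma sym2 n a b S w : Wprop n a b S w -> (forall J, S2 n a b J -> S J) ->
  forall k l, (1 <= k <= n)%nat -> (1 <= l <= n)%nat -> k <> l ->
  (inIb a b k || inIb a b l) = true -> w k + w l = Hs a b k l.
Proof.
  intros W Hsub k l Hk Hl Hkl E. destruct (Nat.lt_ge_cases k l).
  - assert (HS : S (k, l)). { apply Hsub. split; [unfold is_pair; simpl; lia|exact E]. }
    apply (W k l) in HS; try lia. exact HS.
  - rewrite orb_comm in E. assert (HS : S (l, k)). { apply Hsub. split; [unfold is_pair; simpl; lia|exact E]. }
    apply (W l k) in HS; try lia. rewrite Hs_sym. lra.
Qed.

Lemma inIb_val a b k : inIb a b k = true <-> (a + 1 <= k /\ k <= b)%nat.
Proof. apply inIb_true. Qed.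

Ltac ib := match goal with
  | |- inIb ?a ?b ?k = true => apply inIb_true; lia
  | |- inIb ?a ?b ?k = false => apply inIb_false; lia end.

Lemma cell_S1 n a b : (4 <= n)%nat -> (1 <= a)%nat -> (a + 2 <= b)%nat -> (b <= n)%nat ->
  is_cell n (Hf a b) (S1 n a b).
Proof.
  intros. split; [|split].
  - exists (1%nat, n). split; [unfold is_pair; simpl; lia|]. split; [unfold is_pair; simpl; lia|].
    simpl. assert (inIb a b 1 = false) by ib. rewrite H3. reflexivity.
  - intros J [HJ _]; exact HJ.
  - exists (fun _ => 0), 0. intros J HJ. unfold Hf, Hs, S1.
    destruct (inIb a b (fst J) && inIb a b (snd J)); split; try lra; intuition (try congruence; try lra).
Qed.

Lemma cell_S2 n a b : (4 <= n)%nat -> (1 <= a)%nat -> (a + 2 <= b)%nat -> (b <= n)%nat ->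
  is_cell n (Hf a b) (S2 n a b).
Proof.
  intros. split; [|split].
  - exists ((a+1)%nat, (a+2)%nat). split; [unfold is_pair; simpl; lia|]. split; [unfold is_pair; simpl; lia|].
    simpl. assert (inIb a b (a+1) = true) by ib. rewrite H3. reflexivity.
  - intros J [HJ _]; exact HJ.
  - exists (fun k => if inIb a b k then 1 else 0), (-1). intros J HJ. unfold Hf, Hs, S2.
    destruct (inIb a b (fst J)), (inIb a b (snd J)); simpl; split; try lra; intuition (try congruence; try lra).
Qed.

Lemma contain n a b S : is_cell n (Hf a b) S ->
  (forall J, S J -> S1 n a b J) \/ (forall J, S J -> S2 n a b J).
Proof.
  intros Hc. destruct (cell_w _ _ _ _ Hc) as [w W]. pose proof (bound_sym _ _ _ _ _ W) as BS.
  destruct Hc as [_ [Hp _]].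
  destruct (classic (forall J, S J -> S1 n a b J)) as [H|H]; [left; exact H|right].
  apply not_all_ex_not in H. destruct H as [[p1 q1] H1].
  assert (HS1 : S (p1, q1)) by (apply NNPP; intro; apply H1; tauto).
  pose proof (Hp _ HS1) as HP1.
  assert (E1 : (inIb a b p1 && inIb a b q1) = true).
  { destruct (inIb a b p1 && inIb a b q1) eqn:E; auto. exfalso; apply H1; intros _; split; auto. }
  intros [p2 q2] HS2. split; [exact (Hp _ HS2)|]. pose proof (Hp _ HS2) as HP2.
  destruct (inIb a b p2 || inIb a b q2) eqn:E2; auto. exfalso.
  unfold is_pair in HP1, HP2; simpl in *.
  apply andb_true_iff in E1. apply orb_false_iff in E2. destruct E1 as [E1 E1']. destruct E2 as [E2 E2'].
  pose proof (proj1 (proj2 (W p1 q1 ltac:(lia) ltac:(lia) ltac:(lia))) HS1).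
  pose proof (proj1 (proj2 (W p2 q2 ltac:(lia) ltac:(lia) ltac:(lia))) HS2).
  assert (p1 <> p2) by congruence. assert (q1 <> q2) by congruence.
  pose proof (BS p1 p2 ltac:(lia) ltac:(lia) H2).
  pose proof (BS q1 q2 ltac:(lia) ltac:(lia) H3).
  unfold Hs in *. rewrite E1, E1', E2, E2' in *. simpl in *. lra.
Qed.

Lemma max_S1 n a b : (4 <= n)%nat -> (1 <= a)%nat -> (a + 2 <= b)%nat -> (b <= n)%nat -> ~(a = 1%nat /\ b = n) ->
  maximal_cell n (Hf a b) (S1 n a b).
Proof.
  intros. split; [apply cell_S1; auto|]. intros S' Hc Hsub [p q] HJ. split; [apply Hsub|].
  intros HS. split; auto. destruct (cell_w _ _ _ _ Hc) as [w W].
  destruct (inIb a b p && inIb a b q) eqn:E; auto. exfalso.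
  unfold is_pair in HJ; simpl in *.
  pose proof (proj1 (proj2 (W p q ltac:(lia) ltac:(lia) ltac:(lia))) HS) as Hpq.
  apply andb_true_iff in E. destruct E as [Ep Eq].
  unfold Hs in Hpq; rewrite Ep, Eq in Hpq; simpl in Hpq.
  pose proof (sym1 _ _ _ _ _ W Hsub) as Y.
  apply inIb_true in Ep. apply inIb_true in Eq.
  assert (X : exists o2, (1 <= o2 <= n)%nat /\ o2 <> 1%nat /\ inIb a b o2 = false).
  { destruct (Nat.eq_dec b n). exists a. repeat split; try lia. ib.
    exists n. repeat split; try lia. ib. }
  destruct X as [o2 [R2 [N2 I2]]].
  assert (I1 : inIb a b 1 = false) by ib.
  assert (o2 <> p) by (intro; subst; apply inIb_false in I2; lia).
  assert (o2 <> q) by (intro; subst; apply inIb_false in I2; lia).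
  pose proof (Y 1%nat o2 ltac:(lia) R2 ltac:(lia) ltac:(rewrite I1; reflexivity)).
  pose proof (Y 1%nat p ltac:(lia) ltac:(lia) ltac:(lia) ltac:(rewrite I1; reflexivity)).
  pose proof (Y 1%nat q ltac:(lia) ltac:(lia) ltac:(lia) ltac:(rewrite I1; reflexivity)).
  pose proof (Y o2 p R2 ltac:(lia) H4 ltac:(rewrite I2; reflexivity)).
  pose proof (Y o2 q R2 ltac:(lia) H5 ltac:(rewrite I2; reflexivity)).
  lra.
Qed.

Lemma max_S2 n a b : (4 <= n)%nat -> (1 <= a)%nat -> (a + 2 <= b)%nat -> (b <= n)%nat ->
  maximal_cell n (Hf a b) (S2 n a b).
Proof.
  intros. split; [apply cell_S2; auto|]. intros S' Hc Hsub [p q] HJ. split; [apply Hsub|].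
  intros HS. split; auto. destruct (cell_w _ _ _ _ Hc) as [w W].
  destruct (inIb a b p || inIb a b q) eqn:E; auto. exfalso.
  unfold is_pair in HJ; simpl in *.
  pose proof (proj1 (proj2 (W p q ltac:(lia) ltac:(lia) ltac:(lia))) HS) as Hpq.
  apply orb_false_iff in E. destruct E as [Ep Eq].
  unfold Hs in Hpq; rewrite Ep, Eq in Hpq; simpl in Hpq.
  pose proof (sym2 _ _ _ _ _ W Hsub) as Y.
  assert (I1 : inIb a b (a+1) = true) by ib.
  assert (I2 : inIb a b (a+2) = true) by ib.
  apply inIb_false in Ep. apply inIb_false in Eq.
  pose proof (Y (a+1)%nat (a+2)%nat ltac:(lia) ltac:(lia) ltac:(lia) ltac:(rewrite I1; reflexivity)).
  pose proof (Y (a+1)%nat p ltac:(lia) ltac:(lia) ltac:(lia) ltac:(rewrite I1; reflexivity)).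
  pose proof (Y (a+1)%nat q ltac:(lia) ltac:(lia) ltac:(lia) ltac:(rewrite I1; reflexivity)).
  pose proof (Y (a+2)%nat p ltac:(lia) ltac:(lia) ltac:(lia) ltac:(rewrite I2; reflexivity)).
  pose proof (Y (a+2)%nat q ltac:(lia) ltac:(lia) ltac:(lia) ltac:(rewrite I2; reflexivity)).
  unfold Hs in *. rewrite I1, I2 in *.
  assert (Fp : inIb a b p = false) by ib. assert (Fq : inIb a b q = false) by ib.
  rewrite ?Fp, ?Fq in *. simpl in *. lra.
Qed.

Lemma main_split n a b : (4 <= n)%nat -> (1 <= a)%nat -> (a + 2 <= b)%nat -> (b <= n)%nat -> ~(a = 1%nat /\ b = n) ->
  split_positroidal_subdivision n (Hf a b).
Proof.
  intros. split.
  - intros S Hc. eapply cell_positroid; eauto.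
  - exists (S1 n a b), (S2 n a b). split; [apply max_S1; auto|]. split; [apply max_S2; auto|]. split.
    + intro Hsame. specialize (Hsame ((a+1)%nat, (a+2)%nat) ltac:(unfold is_pair; simpl; lia)).
      assert (I1 : inIb a b (a+1) = true) by ib.
      destruct Hsame as [_ Hs2]. destruct Hs2 as [_ Hf1].
      split; [unfold is_pair; simpl; lia|]. simpl. rewrite I1. reflexivity.
      simpl in Hf1. rewrite I1 in Hf1. assert (inIb a b (a+2) = true) by ib. rewrite H4 in Hf1. discriminate.
    + intros S [Hc Hmax]. destruct (contain _ _ _ _ Hc) as [Hs|Hs].
      * left. apply Hmax; auto. apply cell_S1; auto.
      * right. apply Hmax; auto. apply cell_S2; auto.
Qed.


Lemma cell_ext n (h1 h2 : nat * nat -> R) S : (forall J, is_pair n J -> h1 J = h2 J) ->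
  (is_cell n h1 S <-> is_cell n h2 S).
Proof.
  intros E. unfold is_cell. split; intros [A [B [c [c0 H]]]]; (split; [exact A|]); (split; [exact B|]); exists c, c0.
  - intros J HJ. rewrite <- (E J HJ). auto.
  - intros J HJ. rewrite (E J HJ). auto.
Qed.

Lemma split_ext n (h1 h2 : nat * nat -> R) : (forall J, is_pair n J -> h1 J = h2 J) ->
  split_positroidal_subdivision n h2 -> split_positroidal_subdivision n h1.
Proof.
  intros E [Hpos [T1 [T2 [M1 [M2 [N U]]]]]].
  assert (CE := fun S => cell_ext n h1 h2 S E).
  assert (ME : forall S, maximal_cell n h1 S <-> maximal_cell n h2 S).
  { intro S. unfold maximal_cell. split; intros [Hc Hm]; split.
    - apply CE; auto.
    - intros S' Hc' Hsub. apply Hm; auto. apply CE; auto.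
    - apply CE; auto.
    - intros S' Hc' Hsub. apply Hm; auto. apply CE; auto. }
  split.
  - intros S Hc. apply Hpos. apply CE; auto.
  - exists T1, T2. split; [apply ME; auto|]. split; [apply ME; auto|]. split; [exact N|].
    intros S HS. apply U. apply ME; auto.
Qed.

Theorem theorem5p2 (n a b : nat) (c : nat -> nat) :
  (4 <= n)%nat -> (1 <= a)%nat -> (a < b)%nat -> (b <= n)%nat ->
  ~ frozen n a b ->
  tab_equiv n (onecol a b) (fund_union n c) ->
  split_positroidal_subdivision n (F2_heights (fun l => INR (c l))).
Proof.
  intros Hn Ha Hab Hbn Hfr Heq.
  unfold frozen in Hfr.
  assert (Hab2 : (a + 2 <= b)%nat) by lia.
  assert (Hnf : ~(a = 1%nat /\ b = n)) by tauto.
  apply (split_ext n _ (Hf a b)).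
  - intros [p q] [H1 [H2 H3]]. simpl in *. unfold F2_heights, Hf. simpl.
    apply (heights n a b c); auto. apply (c_val n a b c Heq).
  - apply main_split; auto.
Qed.
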